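(* Let $a,b\in\mathbb{C}$ be such that the six numbers $(t_1,\dots,t_6)=(1,-1,a,-a,b,-b)$ are pairwise distinct, and let ${\mathcal A}^0=\{H_1^0,\dots,H_6^0\}$ be the central arrangement in $\mathbb{C}^3$ with $H_i^0=\{x\in\mathbb{C}^3:\alpha_i\cdot x=0\}$, $\alpha_i=(1,t_i,t_i^2)$. Then ${\mathcal A}^0$ is a central generic arrangement which is non-very generic.
   Context: A central arrangement ${\mathcal A}^0=\{H_1^0,\dots,H_n^0\}$ of linear hyperplanes in $\mathbb{C}^k$ ($k<n$) is called central generic if any $m\le k$ of its hyperplanes intersect in codimension $m$. For $t=(x_1,\dots,x_n)\in\mathbb{C}^n$ the translate ${\mathcal A}^t$ consists of $H_i^{x_i}=H_i^0+\alpha_i x_i$, $\alpha_i$ normal to $H_i^0$. For $L\subset[n]$, $|L|=k+1$, $D_L\subset\mathbb{C}^n$ is the hyperplane of translations $t$ with $\bigcap_{p\in L}H_p^{x_p}\ne\emptyset$; the discriminantal arrangement ${\mathcal B}(n,k,{\mathcal A}^0)$ is the arrangement of all $D_L$. There is a Zariski open dense set $\mathcal Z$ of central generic arrangements of $n$ hyperplanes in $\mathbb{C}^k$ on which the intersection lattice of ${\mathcal B}(n,k,{\mathcal A})$ is constant; arrangements in $\mathcal Z$ are very generic, the others non-very generic. *)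

(* Defs.v *)
From HB Require Import structures.
From mathcomp Require Import all_boot all_order all_algebra.
From mathcomp Require Import mpoly.
From mathcomp Require Import reals complex.
Set Implicit Arguments. Unset Strict Implicit. Unset Printing Implicit Defensive.
Import Order.TTheory GRing.Theory Num.Theory.
Local Open Scope ring_scope.

Section Arr.
Variable F : fieldType.

(* An arrangement of n hyperplanes in F^k is given by the matrix M whose
   i-th row alpha_i = row i M is the normal vector of H_i^0 = {x | alpha_i . x = 0}. *)
Definition dotv k (u v : 'rV[F]_k) : F := (u *m v^T) 0 0.

Definition hyp0 n k (M : 'M[F]_(n, k)) (i : 'I_n) : 'M[F]_k :=
  kermx (row i M)^T.

Definition central_generic n k (M : 'M[F]_(n, k)) : Prop :=
  (forall i, row i M != 0) /\
  forall S : {set 'I_n}, (#|S| <= k)%N ->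
    (k - \rank (\bigcap_(i in S) hyp0 M i)%MS)%N = #|S|.

Definition in_transl n k (M : 'M[F]_(n, k)) (p : 'I_n) (x : F) (v : 'rV[F]_k) : Prop :=
  exists w : 'rV[F]_k, dotv w (row p M) = 0 /\ v = w + x *: row p M.

Definition D_L n k (M : 'M[F]_(n, k)) (L : {set 'I_n}) (t : 'rV[F]_n) : Prop :=
  exists v : 'rV[F]_k, forall p, p \in L -> in_transl M p (t 0 p) v.

(* intersection of the hyperplanes D_L of B(n,k,A) indexed by a family S
   (only the L with |L| = k+1 are hyperplanes of B(n,k,A)) *)
Definition B_inter n k (M : 'M[F]_(n, k)) (S : {set {set 'I_n}}) (t : 'rV[F]_n) : Prop :=
  forall L, L \in S -> #|L| = k.+1 -> D_L M L t.

(* the (labelled) intersection lattice of B(n,k,A): inclusion relation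
   between the intersections of the subfamilies *)
Definition B_lattice_le n k (M : 'M[F]_(n, k)) (S T : {set {set 'I_n}}) : Prop :=
  forall t, B_inter M S t -> B_inter M T t.

Definition same_B_lattice n k (M M' : 'M[F]_(n, k)) : Prop :=
  forall S T, B_lattice_le M S T <-> B_lattice_le M' S T.

Definition peval n k (P : {mpoly F[n * k]}) (M : 'M[F]_(n, k)) : F :=
  meval (fun j => mxvec M 0 j) P.

(* very generic: A lies in a (nonempty, hence dense) Zariski open set of
   central generic arrangements on which the intersection lattice of
   B(n,k,.) is constant; principal opens {P <> 0} form a basis. *)
Definition very_generic n k (M : 'M[F]_(n, k)) : Prop :=
  exists P : {mpoly F[n * k]},
    [/\ P != 0, peval P M != 0,
        forall M', peval P M' != 0 -> central_generic M' &
        forall M', peval P M' != 0 -> same_B_lattice M M'].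

Definition non_very_generic n k (M : 'M[F]_(n, k)) : Prop :=
  central_generic M /\ ~ very_generic M.

End Arr.

Definition moment_arr (F : fieldType) (t : 'I_6 -> F) : 'M[F]_(6, 3) :=
  \matrix_(i < 6, j < 3) (t i) ^+ j.

Definition tseq (F : fieldType) (a b : F) : seq F := [:: 1; -1; a; -a; b; -b].

(* Main.v *)
Require Import Defs.
From HB Require Import structures.
From mathcomp Require Import all_boot all_order all_algebra.
From mathcomp Require Import mpoly.
From mathcomp Require Import reals complex.
From mathcomp Require Import ring.
Set Implicit Arguments. Unset Strict Implicit. Unset Printing Implicit Defensive.
Import Order.TTheory GRing.Theory Num.Theory.
Local Open Scope ring_scope.

Definition o0 : 'I_6 := @Ordinal 6 0 isT.
Definition o1 : 'I_6 := @Ordinal 6 1 isT.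
Definition o2 : 'I_6 := @Ordinal 6 2 isT.
Definition o3 : 'I_6 := @Ordinal 6 3 isT.
Definition o4 : 'I_6 := @Ordinal 6 4 isT.
Definition o5 : 'I_6 := @Ordinal 6 5 isT.
Definition L1 : {set 'I_6} := o0 |: (o1 |: (o2 |: [set o3])).
Definition L2 : {set 'I_6} := o0 |: (o1 |: (o4 |: [set o5])).
Definition L3 : {set 'I_6} := o2 |: (o3 |: (o4 |: [set o5])).
Lemma cL1 : #|L1| = 4%N. Proof. by rewrite !cardsU1 !inE cards1. Qed.
Lemma cL2 : #|L2| = 4%N. Proof. by rewrite !cardsU1 !inE cards1. Qed.
Lemma cL3 : #|L3| = 4%N. Proof. by rewrite !cardsU1 !inE cards1. Qed.

Section General.
Variable F : fieldType.

Definition i0 : 'I_3 := @Ordinal 3 0 isT.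
Definition i1 : 'I_3 := @Ordinal 3 1 isT.
Definition i2 : 'I_3 := @Ordinal 3 2 isT.

Lemma dotv3 (v w : 'rV[F]_3) :
  dotv v w = v 0 i0 * w 0 i0 + v 0 i1 * w 0 i1 + v 0 i2 * w 0 i2.
Proof.
rewrite /dotv !mxE !big_ord_recl big_ord0 addr0 addrA !mxE.
by congr (_ * _ + _ * _ + _ * _); congr (_ _ _); apply: val_inj.
Qed.

Lemma in_translE n k (M : 'M[F]_(n,k)) p x v :
  in_transl M p x v <-> dotv v (row p M) = x * dotv (row p M) (row p M).
Proof.
have dotDl (w1 w2 r : 'rV[F]_k) : dotv (w1 + w2) r = dotv w1 r + dotv w2 r.
  by rewrite /dotv mulmxDl mxE.
have dotZl c (w r : 'rV[F]_k) : dotv (c *: w) r = c * dotv w r.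
  by rewrite /dotv -scalemxAl mxE.
split=> [[w [w0 ->]]|h]; first by rewrite dotDl dotZl w0 add0r.
exists (v + (- x) *: row p M); split; last by rewrite scaleNr addrNK.
by rewrite dotDl dotZl h mulNr addrN.
Qed.

Lemma peval_line n k (M N : 'M[F]_(n,k)) (P : {mpoly F[n*k]}) s :
  (mmap polyC (fun j => (mxvec M 0 j)%:P + (mxvec N 0 j)%:P * 'X) P).[s]
  = peval P (M + s *: N).
Proof.
rewrite /peval mevalE /mmap horner_sum; apply: eq_bigr => m _.
rewrite hornerM hornerC /mmap1 horner_prod; congr (_ * _); apply: eq_bigr => i _.
by rewrite horner_exp hornerD hornerC hornerCM hornerX linearD linearZ /= !mxE mulrC.
Qed.

Lemma rowfree_vander m (c : 'I_m -> F) : (m <= 3)%N -> injective c ->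
  row_free (\matrix_(j < m, l < 3) c j ^+ l).
Proof.
move=> hm cinj; rewrite -kermx_eq0; apply/rowV0P => w /sub_kermxP wR0.
apply/rowP => j0; rewrite mxE.
pose rs := rem j0 (enum 'I_m).
pose q := \prod_(j <- rs) ('X - (c j)%:P).
have sq : (size q <= 3)%N.
  by rewrite size_prod_XsubC size_rem ?mem_enum // size_enum_ord; case: (m) hm.
have key : \sum_j w 0 j * q.[c j] = 0.
  transitivity (\sum_j \sum_(l < 3) w 0 j * (q`_l * c j ^+ l)).
    by apply: eq_bigr => j _; rewrite (horner_coef_wide _ sq) mulr_sumr.
  rewrite exchange_big /= big1 // => l _.
  have := congr1 (fun A : 'M[F]_(1,3) => A 0 l) wR0; rewrite !mxE => e.
  rewrite (eq_bigr (fun j => q`_l * (w 0 j * c j ^+ l))); last by move=> j _; rewrite mulrCA.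
  rewrite -mulr_sumr; apply/eqP; rewrite mulf_eq0; apply/orP; right; apply/eqP.
  by apply: (etrans _ e); apply: eq_bigr => j _; rewrite mxE.
rewrite (bigD1 j0) //= big1 ?addr0 in key => [|j jj0].
  move/eqP: key; rewrite mulf_eq0 => /orP[/eqP //|].
  rewrite horner_prod prodf_seq_eq0 => /hasP [j].
  rewrite mem_rem_uniq ?enum_uniq // inE /= => /andP [jj0 _].
  by rewrite hornerXsubC subr_eq0 => /eqP /cinj /eqP; rewrite eq_sym (negbTE jj0).
rewrite horner_prod (big_rem j) /=; last first.
  by rewrite mem_rem_uniq ?enum_uniq // inE /= jj0 mem_enum.
by rewrite hornerXsubC subrr mul0r mulr0.
Qed.

Lemma cg_of_free n k (M : 'M[F]_(n,k)) : (forall i, row i M != 0) ->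
  (forall S : {set 'I_n}, (#|S| <= k)%N ->
     row_free (rowsub (fun j : 'I_#|S| => enum_val j) M)) ->
  central_generic M.
Proof.
move=> nz fr; split=> // S hS.
set R := rowsub (fun j : 'I_#|S| => enum_val j) M.
have eR (w : 'rV[F]_k) j :
    (w *m R^T) 0 j = (w *m (row (enum_val j) M)^T) 0 0.
  by rewrite !mxE; apply: eq_bigr => l _; rewrite !mxE.
have eq : (\bigcap_(i in S) hyp0 M i == kermx R^T)%MS.
  apply/andP; split; apply/row_subP => r.
    set w := row r _.
    have Hw : forall i, i \in S -> (w <= hyp0 M i)%MS.
      by apply/sub_bigcapmxP; apply: row_sub.
    rewrite sub_kermx; apply/eqP/rowP => j; rewrite eR.
    have := Hw _ (enum_valP j); rewrite /hyp0 sub_kermx => /eqP ->.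
    by rewrite !mxE.
  set w := row r _.
  have Hw : w *m R^T = 0 by apply/sub_kermxP; apply: row_sub.
  apply/sub_bigcapmxP => i iS; rewrite /hyp0 sub_kermx; apply/eqP/matrixP => x y.
  rewrite !ord1 -(enum_rankK_in iS iS) -eR Hw !mxE //.
rewrite (eqmx_rank eq) mxrank_ker mxrank_tr.
by move/eqP: (fr S hS) => ->; rewrite subKn.
Qed.

End General.

Lemma poly_nonroot (R : numDomainType) (q : {poly R}) : q != 0 -> exists x, q.[x] != 0.
Proof.
move=> q0.
have U : uniq [seq i%:R : R | i <- iota 0 (size q)].
  rewrite map_inj_uniq ?iota_uniq // => i j /eqP; rewrite eqr_nat => /eqP //.
have : ~~ all (root q) [seq i%:R : R | i <- iota 0 (size q)].
  apply/negP => /(max_poly_roots q0) /(_ U).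
  by rewrite size_map size_iota ltnn.
by case/allPn => x _ h; exists x.
Qed.

Section Lin.
Variable F : fieldType.
Lemma lin1 (x y A B k : F) : A = B -> x - y = k * (A - B) -> x = y.
Proof. by move=> ->; rewrite subrr mulr0 => /eqP; rewrite subr_eq0 => /eqP. Qed.
Lemma lin2 (x y A B C D k l : F) : A = B -> C = D ->
  x - y = k * (A - B) + l * (C - D) -> x = y.
Proof. by move=> -> ->; rewrite !subrr !mulr0 addr0 => /eqP; rewrite subr_eq0 => /eqP. Qed.
Lemma lin4 (x y A B C D E G H I k1 k2 k3 k4 : F) : A = B -> C = D -> E = G -> H = I ->
  x - y = k1 * (A - B) + k2 * (C - D) + k3 * (E - G) + k4 * (H - I) -> x = y.
Proof.
by move=> -> -> -> ->; rewrite !subrr !mulr0 !addr0 => /eqP; rewrite subr_eq0 => /eqP.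
Qed.


End Lin.

Section Spec.
Variables (F : numFieldType) (a b : F).
Hypothesis Hu : uniq (tseq a b).
Local Notation u := (fun i : 'I_6 => nth 0 (tseq a b) i).
Local Notation M := (moment_arr u).

Lemma facts : [/\ a != 0, a ^+ 2 != 1, a ^+ 2 != b ^+ 2 & (2 : F) != 0].
Proof.
move: Hu; rewrite /= !inE !negb_or => /andP [/and5P [_ a1 _ _ _] /and5P [/and4P [a1' _ _ _]
  /and3P [aa ab anb] _ _ _]].
split; last by rewrite pnatr_eq0.
- by apply/eqP => a0; move: aa; rewrite a0 oppr0 eqxx.
- by rewrite sqrf_eq1 negb_or eq_sym a1 eq_sym a1'.
- by rewrite eqf_sqr negb_or ab anb.
Qed.

Ltac simpl_dot e := rewrite ?dotv3 /moment_arr ?mxE /= ?expr0 ?expr1 in e.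

Lemma partA : B_lattice_le M [set L1; L2] [set L3].
Proof.
have [a0 a21 ab2 two0] := facts.
move=> t hS L; rewrite inE => /eqP -> _.
have [v1 h1] := hS L1 (set21 _ _) cL1.
have [v2 h2] := hS L2 (set22 _ _) cL2.
have e10 := proj1 (in_translE _ _ _ _) (h1 o0 (ltac:(by rewrite !inE))).
have e11 := proj1 (in_translE _ _ _ _) (h1 o1 (ltac:(by rewrite !inE))).
have e12 := proj1 (in_translE _ _ _ _) (h1 o2 (ltac:(by rewrite !inE))).
have e13 := proj1 (in_translE _ _ _ _) (h1 o3 (ltac:(by rewrite !inE))).
have e20 := proj1 (in_translE _ _ _ _) (h2 o0 (ltac:(by rewrite !inE))).
have e21 := proj1 (in_translE _ _ _ _) (h2 o1 (ltac:(by rewrite !inE))).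
have e24 := proj1 (in_translE _ _ _ _) (h2 o4 (ltac:(by rewrite !inE))).
have e25 := proj1 (in_translE _ _ _ _) (h2 o5 (ltac:(by rewrite !inE))).
simpl_dot e10; simpl_dot e11; simpl_dot e12; simpl_dot e13.
simpl_dot e20; simpl_dot e21; simpl_dot e24; simpl_dot e25.
have ey : v1 0 i1 = v2 0 i1.
  apply: (mulfI two0); apply: (lin4 e10 e11 e20 e21 (k1 := 1) (k2 := -1) (k3 := -1) (k4 := 1)).
  ring.
exists (\row_j nth 0 [:: v1 0 i0 + v1 0 i2 * a ^+ 2 -
          ((v1 0 i0 + v1 0 i2 * a ^+ 2) - (v2 0 i0 + v2 0 i2 * b ^+ 2)) / (a ^+ 2 - b ^+ 2) * a ^+ 2;
     v1 0 i1;
     ((v1 0 i0 + v1 0 i2 * a ^+ 2) - (v2 0 i0 + v2 0 i2 * b ^+ 2)) / (a ^+ 2 - b ^+ 2)] j).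
have ab0 : a ^+ 2 - b ^+ 2 != 0 by rewrite subr_eq0.
move=> p; rewrite !inE => /or4P [] /eqP -> ; apply/in_translE; rewrite !dotv3 /moment_arr !mxE /= ?expr0 ?expr1.
- by apply: (lin1 e12 (k := 1)); field.
- by apply: (lin1 e13 (k := 1)); field.
- by rewrite ey; apply: (lin1 e24 (k := 1)); field.
- by rewrite ey; apply: (lin1 e25 (k := 1)); field.
Qed.

End Spec.

Section SpecB.
Variables (F : fieldType) (a b : F).
Hypotheses (a0 : a != 0) (a21 : a ^+ 2 != 1) (two0 : (2 : F) != 0).
Local Notation u := (fun i : 'I_6 => nth 0 (tseq a b) i).
Local Notation M := (moment_arr u).

Definition Nm : 'M[F]_(6,3) := \matrix_(i, j) (if (i == 4 :> nat) && (j == 2 :> nat) then 1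
  else if (i == 5 :> nat) && (j == 2 :> nat) then -1 else 0).

Lemma partB s : s != 0 ->
  dotv (row o4 (M + s *: Nm)) (row o4 (M + s *: Nm)) != 0 ->
  dotv (row o5 (M + s *: Nm)) (row o5 (M + s *: Nm)) != 0 ->
  ~ B_lattice_le (M + s *: Nm) [set L1; L2] [set L3].
Proof.
move=> s0 c4 c5 H.
pose t : 'rV[F]_6 := \row_(j < 6) (if j == 4 :> nat then (b ^+ 2 + s - 1) / dotv (row o4 (M + s *: Nm)) (row o4 (M + s *: Nm))
   else if j == 5 :> nat then (b ^+ 2 - s - 1) / dotv (row o5 (M + s *: Nm)) (row o5 (M + s *: Nm)) else 0).
have : B_inter (M + s *: Nm) [set L1; L2] t.
  move=> L; rewrite !inE => /orP [] /eqP -> _.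
    exists 0 => p; rewrite !inE => /or4P [] /eqP -> ; apply/in_translE; rewrite /t mxE /=;
    rewrite !dotv3 !mxE /=; ring.
  exists (\row_j nth 0 [:: -1; 0; 1] j) => p; rewrite !inE => /or4P [] /eqP -> ; apply/in_translE; rewrite /t mxE /=.
  - rewrite !dotv3 /Nm /moment_arr !mxE /=; ring.
  - rewrite !dotv3 /Nm /moment_arr !mxE /=; ring.
  - rewrite (divfK c4) !dotv3 /Nm /moment_arr !mxE /=; ring.
  - rewrite (divfK c5) !dotv3 /Nm /moment_arr !mxE /=; ring.
move/H => /(_ L3 (set11 _) cL3) [v hv].
have e2 := proj1 (in_translE _ _ _ _) (hv o2 (ltac:(by rewrite !inE))).
have e3 := proj1 (in_translE _ _ _ _) (hv o3 (ltac:(by rewrite !inE))).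
have e4 := proj1 (in_translE _ _ _ _) (hv o4 (ltac:(by rewrite !inE))).
have e5 := proj1 (in_translE _ _ _ _) (hv o5 (ltac:(by rewrite !inE))).
rewrite /t mxE /= in e2; rewrite /t mxE /= in e3; rewrite /t mxE /= in e4; rewrite /t mxE /= in e5.
rewrite (divfK c4) in e4; rewrite (divfK c5) in e5.
rewrite !dotv3 /Nm /moment_arr !mxE /= in e2; rewrite !dotv3 /Nm /moment_arr !mxE /= in e3.
rewrite !dotv3 /Nm /moment_arr !mxE /= in e4; rewrite !dotv3 /Nm /moment_arr !mxE /= in e5.
have hy : v 0 i1 = 0.
  have : 2 * a * v 0 i1 = 0.
    by apply: (lin2 e2 e3 (k := 1) (l := -1)); ring.
  by move/eqP; rewrite !mulf_eq0 (negbTE two0) (negbTE a0) /= => /eqP.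
rewrite hy in e2 e3 e4 e5.
have hz : v 0 i2 = 1.
  have s2 : 2 * s != 0 by rewrite mulf_neq0.
  apply: (mulfI s2); apply: (lin2 e4 e5 (k := 1) (l := -1)); ring.
rewrite hz in e2 e4.
have : a ^+ 2 = 1 by apply: (lin2 e2 e4 (k := 1) (l := -1)); ring.
by move/eqP; rewrite (negbTE a21).
Qed.

End SpecB.

Section Final.
Variables (F : numFieldType) (a b : F).
Hypothesis Hu : uniq (tseq a b).
Local Notation u := (fun i : 'I_6 => nth 0 (tseq a b) i).
Local Notation M := (moment_arr u).
Local Notation NN := (Nm F).

Lemma u_inj : injective u.
Proof.
move=> i j /eqP; rewrite (@nth_uniq _ 0 (tseq a b) i j (ltn_ord i) (ltn_ord j) Hu) => /eqP; exact: val_inj.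
Qed.

Lemma cgM : central_generic M.
Proof.
apply: cg_of_free.
  move=> i; apply/eqP => /matrixP /(_ 0 i0); rewrite /moment_arr !mxE /= expr0 => /eqP.
  by rewrite oner_eq0.
move=> S hS.
have -> : rowsub (fun j : 'I_#|S| => enum_val j) M
          = \matrix_(j, l) (u (enum_val j)) ^+ l by apply/matrixP => j l; rewrite !mxE.
by apply: rowfree_vander hS _ => j1 j2 /u_inj /enum_val_inj.
Qed.

Lemma not_vg : ~ very_generic M.
Proof.
have [a0 a21 ab2 two0] := facts Hu.
case=> P [P0 PM _ sameP].
pose h := fun j => (mxvec M 0 j)%:P + (mxvec NN 0 j)%:P * 'X.
pose p : {poly F} := mmap polyC h P.
have pE x : p.[x] = peval P (M + x *: NN) := peval_line M NN P x.
have p0 : p != 0.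
  apply/negP => /eqP e; move: PM; rewrite -(addr0 M) -(scale0r NN) -pE e horner0.
  by rewrite eqxx.
pose c4p : {poly F} := (1 + b ^+ 2)%:P + ((b ^+ 2)%:P + 'X) ^+ 2.
pose c5p : {poly F} := (1 + b ^+ 2)%:P + ((b ^+ 2)%:P - 'X) ^+ 2.
have c4p0 : c4p != 0.
  apply/negP => /eqP e.
  have h1 := congr1 (horner^~ (- b ^+ 2)) e; have h2 := congr1 (horner^~ (1 - b ^+ 2)) e.
  rewrite /= !(hornerD, hornerN, hornerC, hornerX, horner_exp) in h1 h2.
  have : (1 : F) = 0 by apply: (lin2 h2 h1 (k := 1) (l := -1)); ring.
  by move/eqP; rewrite oner_eq0.
have c5p0 : c5p != 0.
  apply/negP => /eqP e.
  have h1 := congr1 (horner^~ (b ^+ 2)) e; have h2 := congr1 (horner^~ (b ^+ 2 - 1)) e.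
  rewrite /= !(hornerD, hornerN, hornerC, hornerX, horner_exp) in h1 h2.
  have : (1 : F) = 0 by apply: (lin2 h2 h1 (k := 1) (l := -1)); ring.
  by move/eqP; rewrite oner_eq0.
have Q0 : p * 'X * c4p * c5p != 0 by rewrite !mulf_neq0 // polyX_eq0.
have [x] := poly_nonroot Q0.
rewrite !hornerM !mulf_eq0 !negb_or hornerX => /andP [/andP [/andP [px x0] c4x] c5x].
have d4 : dotv (row o4 (M + x *: NN)) (row o4 (M + x *: NN)) != 0.
  suff -> : dotv (row o4 (M + x *: NN)) (row o4 (M + x *: NN)) = c4p.[x] by [].
  rewrite dotv3 /Nm /moment_arr !mxE /= /c4p !(hornerD, hornerN, hornerC, hornerX, horner_exp); ring.
have d5 : dotv (row o5 (M + x *: NN)) (row o5 (M + x *: NN)) != 0.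
  suff -> : dotv (row o5 (M + x *: NN)) (row o5 (M + x *: NN)) = c5p.[x] by [].
  rewrite dotv3 /Nm /moment_arr !mxE /= /c5p !(hornerD, hornerN, hornerC, hornerX, horner_exp); ring.
have := sameP (M + x *: NN); rewrite -pE => /(_ px [set L1; L2] [set L3]) [HAB _].
exact: (partB a0 a21 two0 x0 d4 d5 (HAB (partA Hu))).
Qed.

End Final.

Unset Implicit Arguments.
Set Strict Implicit.

Theorem mainTheorem4 (R : realType) (a b : R[i]) :
  uniq (tseq a b) ->
  central_generic (moment_arr (fun i : 'I_6 => nth 0 (tseq a b) i)) /\
  non_very_generic (moment_arr (fun i : 'I_6 => nth 0 (tseq a b) i)).
Proof.
move=> Hu; have cg := cgM Hu.
by split => //; split => //; exact: not_vg Hu.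
Qed.
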